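(* Let $R$ be a ring and let $V$ be an $(R,R)$-bimodule which is also an idempotent-free ring (not necessarily with identity), and let $S=I(R;V)$ be the ideal extension of $R$ by $V$. The following are equivalent: (1) $S$ is uniquely weakly $I'$-clean for some ideal $I'$ of $S$; (2) (a) $R$ is uniquely weakly $I$-clean for some ideal $I$ of $R$, and (b) for every $e\in Idem(R)$ and every $v\in V$, $ev=ve$.
   Context: All rings other than $V$ are associative with identity; $Idem(R)$ is the set of idempotents. $V$ is an $(R,R)$-bimodule carrying an associative multiplication compatible with the bimodule structure (i.e. $(rv)w=r(vw)$, $(vr)w=v(rw)$, $(vw)r=v(wr)$ for $r\in R$, $v,w\in V$); $V$ is idempotent free if $v^2=v$ implies $v=0$. The ideal extension $I(R;V)$ is the additive group $R\oplus V$ with multiplication $(r,v)(s,w)=(rs,\,rw+vs+vw)$; it is a ring with identity $(1,0)$. For an ideal $I$ of a ring $A$, $A$ is uniquely weakly $I$-clean if for every $x\in A$ there exists a unique idempotent $e\in A$ with $x-e\in I$ or $x+e\in I$. *)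

(* Defs.v *)
From HB Require Import structures.
From mathcomp Require Import all_boot all_order all_algebra.
Set Implicit Arguments. Unset Strict Implicit. Unset Printing Implicit Defensive.
Import GRing.Theory.
Local Open Scope ring_scope.

Record bimodRing (R : pzRingType) (V : zmodType) := BimodRing {
  lact : R -> V -> V;
  ract : V -> R -> V;
  vmul : V -> V -> V;
  lactDl : forall r s v, lact (r + s) v = lact r v + lact s v;
  lactDr : forall r v w, lact r (v + w) = lact r v + lact r w;
  lactA : forall r s v, lact (r * s) v = lact r (lact s v);
  lact1 : forall v, lact 1 v = v;
  ractDl : forall v w r, ract (v + w) r = ract v r + ract w r;
  ractDr : forall v r s, ract v (r + s) = ract v r + ract v s;
  ractA : forall v r s, ract v (r * s) = ract (ract v r) s;
  ract1 : forall v, ract v 1 = v;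
  lractA : forall r v s, ract (lact r v) s = lact r (ract v s);
  vmulA : forall u v w, vmul (vmul u v) w = vmul u (vmul v w);
  vmulDl : forall u v w, vmul (u + v) w = vmul u w + vmul v w;
  vmulDr : forall u v w, vmul u (v + w) = vmul u v + vmul u w;
  lmulA : forall r v w, vmul (lact r v) w = lact r (vmul v w);
  rlmulA : forall v r w, vmul (ract v r) w = vmul v (lact r w);
  rmulA : forall v w r, ract (vmul v w) r = vmul v (ract w r)
}.

Definition idempotent_free (R : pzRingType) (V : zmodType) (B : bimodRing R V) :=
  forall v : V, vmul B v v = v -> v = 0.

Definition iext (R : pzRingType) (V : zmodType) (B : bimodRing R V) : Type :=
  (R * V)%type.

Section IdealExtension.
Variables (R : pzRingType) (V : zmodType) (B : bimodRing R V).

HB.instance Definition _ := GRing.Zmodule.on (iext B).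

Definition iext_one : iext B := (1, 0).
Definition iext_mul (x y : iext B) : iext B :=
  (x.1 * y.1, lact B x.1 y.2 + ract B x.2 y.1 + vmul B x.2 y.2).

Let lact0r v : lact B 0 v = 0.
Proof. by apply: (addrI (lact B 0 v)); rewrite -lactDl !addr0. Qed.
Let lactr0 r : lact B r 0 = 0.
Proof. by apply: (addrI (lact B r 0)); rewrite -lactDr !addr0. Qed.
Let ract0r r : ract B 0 r = 0.
Proof. by apply: (addrI (ract B 0 r)); rewrite -ractDl !addr0. Qed.
Let ractr0 v : ract B v 0 = 0.
Proof. by apply: (addrI (ract B v 0)); rewrite -ractDr !addr0. Qed.
Let vmul0r v : vmul B 0 v = 0.
Proof. by apply: (addrI (vmul B 0 v)); rewrite -vmulDl !addr0. Qed.
Let vmulr0 v : vmul B v 0 = 0.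
Proof. by apply: (addrI (vmul B v 0)); rewrite -vmulDr !addr0. Qed.

Lemma iext_mulA : associative iext_mul.
Proof.
move=> [r v] [s w] [t x]; rewrite /iext_mul /=; congr (_, _); first by rewrite mulrA.
rewrite !lactDr !ractDl !vmulDl !vmulDr -!lactA ractA !lractA !lmulA !rlmulA
        !rmulA !vmulA -!addrA; congr (_ + (_ + _)).
rewrite addrCA; congr (_ + _); rewrite [RHS]addrCA; congr (_ + _).
exact: addrCA.
Qed.

Lemma iext_mul1r : left_id iext_one iext_mul.
Proof.
by move=> [s w]; rewrite /iext_mul /= mul1r lact1 ract0r vmul0r !addr0.
Qed.

Lemma iext_mulr1 : right_id iext_one iext_mul.
Proof.
by move=> [s w]; rewrite /iext_mul /= mulr1 ract1 lactr0 vmulr0 add0r addr0.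
Qed.

Lemma iext_mulDl : left_distributive iext_mul +%R.
Proof.
move=> [r v] [s w] [t x]; rewrite /iext_mul /=; congr (_, _); first by rewrite mulrDl.
rewrite lactDl ractDl vmulDl -!addrA /=; congr (_ + _).
rewrite addrCA; congr (_ + _); rewrite [RHS]addrCA; congr (_ + _).
exact: addrCA.
Qed.

Lemma iext_mulDr : right_distributive iext_mul +%R.
Proof.
move=> [r v] [s w] [t x]; rewrite /iext_mul /=; congr (_, _); first by rewrite mulrDr.
rewrite lactDr ractDr vmulDr -!addrA /=; congr (_ + _).
rewrite addrCA; congr (_ + _); rewrite [RHS]addrCA; congr (_ + _).
exact: addrCA.
Qed.

HB.instance Definition _ := GRing.Zmodule_isPzRing.Build (iext B)
  iext_mulA iext_mul1r iext_mulr1 iext_mulDl iext_mulDr.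

Lemma iext_mulE (x y : iext B) :
  x * y = (x.1 * y.1, lact B x.1 y.2 + ract B x.2 y.1 + vmul B x.2 y.2).
Proof. by []. Qed.

Lemma iext_oneE : (1 : iext B) = (1, 0).
Proof. by []. Qed.

End IdealExtension.

Definition is_ideal (A : pzRingType) (I : {pred A}) : Prop :=
  [/\ 0 \in I,
      forall x y, x \in I -> y \in I -> x - y \in I,
      forall a x, x \in I -> a * x \in I
    & forall a x, x \in I -> x * a \in I].

Definition uniquely_weakly_clean (A : pzRingType) (I : {pred A}) : Prop :=
  forall x : A, exists! e : A, e * e = e /\ (x - e \in I \/ x + e \in I).

(* Main.v *)
Require Import Defs.
From HB Require Import structures.
From mathcomp Require Import all_boot all_order all_algebra.
Import GRing.Theory.
Local Open Scope ring_scope.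

Section Gen.
Variables (A : pzRingType) (I : {pred A}).
Hypotheses (HI : is_ideal I) (HU : uniquely_weakly_clean I).

Lemma idN x : x \in I -> - x \in I.
Proof. by case: HI => H0 HB _ _ Hx; rewrite -sub0r; apply: HB. Qed.

Lemma idD x y : x \in I -> y \in I -> x + y \in I.
Proof. case: HI => H0 HB _ _ Hx Hy; rewrite -[y]opprK; apply: HB => //; exact: idN. Qed.

Lemma idL a x : x \in I -> a * x \in I.
Proof. by case: HI => _ _ H1 H2; auto. Qed.
Lemma idR a x : x \in I -> x * a \in I.
Proof. by case: HI => _ _ H1 H2; auto. Qed.

Lemma nil_in (n : A) : n * n = 0 -> n \in I.
Proof.
move=> nn; have [p [[pp Hp] _]] := HU n.
case: Hp => Hd.
- set d := n - p in Hd.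
  have ep : p = n - d by rewrite /d opprB addrC subrK.
  have Hp : p \in I.
    have -> : p = - (d * n) - p * d.
      by rewrite /d mulrBl mulrBr nn pp sub0r opprK opprB addrCA subrr addr0.
    by apply: idD; [apply: idN; apply: idR | apply: idN; apply: idL].
  have -> : n = d + p by rewrite /d subrK.
  by apply: idD.
- set d := n + p in Hd.
  have ep : p = d - n by rewrite /d [n + p]addrC addrK.
  have Hp : p \in I.
    have -> : p = p * d - d * n.
      by rewrite /d mulrDr mulrDl nn add0r pp addrAC subrr add0r.
    by apply: idD; [apply: idL | apply: idN; apply: idR].
  have -> : n = d - p by rewrite /d addrK.
  by apply: idD => //; apply: idN.
Qed.

Lemma pert0 (e n : A) : e * e = e -> n * n = 0 -> e * n + n * e = n -> n = 0.
Proof.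
move=> ee nn h.
have fe : (e + n) * (e + n) = e + n.
  by rewrite mulrDl !mulrDr ee nn addr0 -addrA h.
have nI : n \in I by exact: nil_in.
have [p [_ Hu]] := HU e.
have m1 : e - e \in I by rewrite subrr; case: HI.
have m2 : e - (e + n) \in I by rewrite opprD addrA subrr sub0r; exact: idN nI.
have h1 := Hu e (conj ee (or_introl m1)).
have h2 := Hu (e + n) (conj fe (or_introl m2)).
by apply: (addrI e); rewrite addr0 -h2 h1.
Qed.

Lemma pertL (e n : A) : e * e = e -> e * n = n -> n * e = 0 -> n = 0.
Proof.
move=> ee en ne; apply: (@pert0 e n ee).
- by rewrite -{2}en mulrA ne mul0r.
- by rewrite en ne addr0.
Qed.

Lemma pertR (e n : A) : e * e = e -> e * n = 0 -> n * e = n -> n = 0.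
Proof.
move=> ee en ne; apply: (@pert0 e n ee).
- by rewrite -{1}ne -mulrA en mulr0.
- by rewrite en ne add0r.
Qed.

Lemma central (e y : A) : e * e = e -> e * y = y * e.
Proof.
move=> ee.
have z : (1 - e) * e = 0 by rewrite mulrBl mul1r ee subrr.
have z' : e * (1 - e) = 0 by rewrite mulrBr mulr1 ee subrr.
have h1 : e * y * (1 - e) = 0.
  apply: (@pertL e _ ee); first by rewrite !mulrA ee.
  by rewrite -mulrA z mulr0.
have h2 : (1 - e) * y * e = 0.
  apply: (@pertR e _ ee); last by rewrite -[LHS]mulrA ee.
  by rewrite !mulrA z' !mul0r.
move: h1 h2; rewrite mulrBr mulr1 !mulrBl !mul1r => /eqP; rewrite subr_eq0 => /eqP ->.
by rewrite -[e * y * e * e]mulrA ee => /eqP; rewrite subr_eq0 => /eqP ->.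
Qed.
End Gen.

Section Ext.
Variables (R : pzRingType) (V : zmodType) (B : bimodRing R V).

Lemma lact0r v : lact B 0 v = 0.
Proof. by apply: (addrI (lact B 0 v)); rewrite -lactDl !addr0. Qed.
Lemma lactr0 r : lact B r 0 = 0.
Proof. by apply: (addrI (lact B r 0)); rewrite -lactDr !addr0. Qed.
Lemma ract0r r : ract B 0 r = 0.
Proof. by apply: (addrI (ract B 0 r)); rewrite -ractDl !addr0. Qed.
Lemma ractr0 v : ract B v 0 = 0.
Proof. by apply: (addrI (ract B v 0)); rewrite -ractDr !addr0. Qed.
Lemma vmul0r v : vmul B 0 v = 0.
Proof. by apply: (addrI (vmul B 0 v)); rewrite -vmulDl !addr0. Qed.
Lemma vmulr0 v : vmul B v 0 = 0.
Proof. by apply: (addrI (vmul B v 0)); rewrite -vmulDr !addr0. Qed.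
Lemma vmulNl u v : vmul B (- u) v = - vmul B u v.
Proof. by apply: (addrI (vmul B u v)); rewrite -vmulDl !subrr vmul0r. Qed.
Lemma vmulNr u v : vmul B u (- v) = - vmul B u v.
Proof. by apply: (addrI (vmul B u v)); rewrite -vmulDr !subrr vmulr0. Qed.

Lemma idem0 (HV : idempotent_free B)
  (Hc : forall (e : R) (v : V), e * e = e -> lact B e v = ract B v e)
  (e : R) (w : V) : e * e = e -> lact B e w + ract B w e + vmul B w w = w -> w = 0.
Proof.
move=> ee h; rewrite -(Hc e w ee) in h.
set a := lact B e w in h.
have ea : lact B e a = a by rewrite /a -lactA ee.
have h2 : vmul B a w = - a.
  have := congr1 (lact B e) h; rewrite !lactDr ea -lmulA -/a.
  by move=> H; apply: (addrI (a + a)); rewrite H addrK.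
have h3 : vmul B a a = - a.
  rewrite {1}/a (Hc e w ee) rlmulA ea {1}/a -rlmulA -(Hc e w ee) -/a.
  exact: h2.
have a0 : a = 0.
  apply: oppr_inj; rewrite oppr0; apply: HV; by rewrite vmulNl vmulNr opprK h3.
apply: HV; move: h; by rewrite a0 !add0r.
Qed.

Lemma subE (a c : R) (b d : V) : ((a,b) - (c,d) : iext B) = (a - c, b - d).
Proof. by []. Qed.
Lemma addE (a c : R) (b d : V) : ((a,b) + (c,d) : iext B) = (a + c, b + d).
Proof. by []. Qed.
Lemma mul0E (a c : R) : ((a,0) : iext B) * ((c,0) : iext B) = (a * c, 0).
Proof. by rewrite iext_mulE /= lactr0 ract0r vmul0r !addr0. Qed.
End Ext.

Theorem mainTheorem14 (R : pzRingType) (V : zmodType) (B : bimodRing R V)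
    (HV : idempotent_free B) :
  (exists I' : {pred iext B}, is_ideal I' /\ uniquely_weakly_clean I') <->
  ((exists I : {pred R}, is_ideal I /\ uniquely_weakly_clean I) /\
   (forall (e : R) (v : V), e * e = e -> lact B e v = ract B v e)).
Proof.
split.
- move=> [I' [HI' HU']].
  have Hc : forall (e : R) (v : V), e * e = e -> lact B e v = ract B v e.
    move=> e v ee.
    have g : ((e, 0) : iext B) * (e, 0) = (e, 0) by rewrite mul0E ee.
    have := congr1 snd (@central _ _ HI' HU' ((e, 0) : iext B) ((0, v) : iext B) g).
    by rewrite !iext_mulE /= ract0r vmul0r lact0r vmulr0 !addr0 add0r.
  split => //.
  exists (fun r : R => ((r, 0) : iext B) \in I'); split.
  + case: HI' => H0 HB HL HR; split.
    * by rewrite unfold_in /=.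
    * move=> x y; rewrite !unfold_in /= => hx hy; have := HB _ _ hx hy.
      by rewrite subE subrr.
    * move=> a x; rewrite !unfold_in /= => hx; have := HL (a, 0) _ hx.
      by rewrite mul0E.
    * move=> a x; rewrite !unfold_in /= => hx; have := HR (a, 0) _ hx.
      by rewrite mul0E.
  + move=> r; have [[e w] [[ew hx] hu]] := HU' (r, 0).
    have ee : e * e = e := congr1 fst ew.
    have hw := congr1 snd ew; rewrite iext_mulE /= in hw.
    have w0 := @idem0 _ _ B HV Hc _ _ ee hw; subst w.
    exists e; split.
      split => //; rewrite !unfold_in /=.
      by case: hx => h; [left | right]; move: h; rewrite !unfold_in /= ?subE ?addE ?subr0 ?addr0.
    move=> e' [ee' h'].
    apply: (congr1 fst (hu (e', 0) _)); split; first by rewrite mul0E ee'.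
    by case: h' => h; [left | right]; move: h; rewrite !unfold_in /= ?subE ?addE ?subr0 ?addr0.
- move=> [[I [HI HU]] Hc].
  exists (fun x : iext B => x.1 \in I); split.
  + case: HI => H0 HB HL HR; split.
    * by rewrite unfold_in /=.
    * by move=> [x1 x2] [y1 y2]; rewrite !unfold_in /=; exact: HB.
    * by move=> [x1 x2] [y1 y2]; rewrite !unfold_in /=; exact: HL.
    * by move=> [x1 x2] [y1 y2]; rewrite !unfold_in /=; exact: HR.
  + move=> [r v]; have [e [[ee he] hu]] := HU r.
    exists (e, 0); split.
      split; first by rewrite mul0E ee.
      by move: he; rewrite !unfold_in /=.
    move=> [f u] [fu hf].
    have ff : f * f = f := congr1 fst fu.
    have hw := congr1 snd fu; rewrite iext_mulE /= in hw.
    have u0 := @idem0 _ _ B HV Hc _ _ ff hw; subst u.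
    congr (_, _); apply: hu; split => //.
Qed.
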